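(* Let $n \ge 1$ and let $T_n$ be the $n\times n$ matrix with entries $t_{ij} = |i-j|$ for $i,j = 1,\ldots,n$. Then $T_n$ is solvable if and only if $n \equiv 0$ or $1 \pmod 4$. Equivalently: there exists a permutation $f:\{1,\ldots,n\}\to\{1,\ldots,n\}$ such that $|f(i)-i|$ takes each of the values $0,1,\ldots,n-1$ exactly once (as $i$ ranges over $\{1,\ldots,n\}$) if and only if $n \equiv 0$ or $1 \pmod 4$.
   Context: $T_n$ is called solvable if one can select $n$ entries of $T_n$, no two in the same row or the same column, whose values are exactly $0,1,\ldots,n-1$ (each value once). *)

(* Defs.v *)
From mathcomp Require Import all_boot all_order all_algebra all_fingroup.
Set Implicit Arguments. Unset Strict Implicit. Unset Printing Implicit Defensive.

(* T_n : the n x n matrix with entries |i - j| (0-indexed rows/columns;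
   the difference is shift-invariant so this equals the 1-indexed version). *)
Definition Tmat (n : nat) : 'M[nat]_n :=
  \matrix_(i < n, j < n) `|(i : nat) - (j : nat)|%N.

(* A square nat matrix A is solvable if one can select n entries, no two in the
   same row or column (i.e. the entries A i (s i) for a permutation s), whose
   values are exactly 0, 1, ..., n-1, each value once. *)
Definition solvable_mx (n : nat) (A : 'M[nat]_n) : Prop :=
  exists s : 'S_n, perm_eq [seq A i (s i) | i : 'I_n] (iota 0 n).

(* Main.v *)
Require Import Defs.
From mathcomp Require Import all_boot all_order all_algebra all_fingroup zify.

Lemma build n (g : nat -> nat) :
  (forall x, x < n -> g x < n) ->
  (forall x y, x < n -> y < n -> g x = g y -> x = y) ->
  (forall x y, x < n -> y < n -> `|(x:nat) - (g x : nat)|%N = `|(y:nat) - (g y:nat)|%N -> x = y) ->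
  solvable_mx (Tmat n).
Proof.
move=> Hr Hi Hd.
pose h (i : 'I_n) : 'I_n := Ordinal (Hr _ (ltn_ord i)).
have hinj : injective h.
  by move=> i j /(congr1 val) /= /Hi => /(_ (ltn_ord i) (ltn_ord j)) /val_inj.
exists (perm hinj).
have E : [seq Tmat n i (perm hinj i) | i : 'I_n] = [seq `|(i:nat) - (g i : nat)|%N | i : 'I_n].
  by apply: eq_map => i; rewrite /Tmat mxE permE.
rewrite E.
have U : uniq [seq `|(i:nat) - (g i : nat)|%N | i : 'I_n].
  rewrite map_inj_uniq ?enum_uniq // => i j /Hd H.
  by apply: val_inj; apply: H.
have S1 : {subset [seq `|(i:nat) - (g i : nat)|%N | i : 'I_n] <= iota 0 n}.
  move=> x /mapP [i _ ->]; rewrite mem_iota /=.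
  have := Hr _ (ltn_ord i); have := ltn_ord i; lia.
have S2 : size (iota 0 n) <= size [seq `|(i:nat) - (g i : nat)|%N | i : 'I_n].
  by rewrite size_map size_enum_ord size_iota.
have [H1 H2] := uniq_min_size U S1 S2.
by apply: uniq_perm => //; apply: iota_uniq.
Qed.
Definition g0 (k x : nat) : nat :=
  if x < k then 4*k-1-x else if x == k then k else if x < 2*k then 4*k-x
  else if x == 2*k then 0 else if x <= 3*k then 4*k+1-x else 4*k-x.

Definition g1 (k x : nat) : nat :=
  if x < k then 4*k-x else if x < 2*k then 4*k-1-x else if x == 2*k then 0
  else if x < 3*k then 4*k-x else if x == 3*k then 3*k else 4*k+1-x.

Ltac crush := rewrite ?/g0 ?/g1; repeat (case: ifP => ?); lia.

Lemma g0_range k x : 0 < k -> x < 4*k -> g0 k x < 4*k.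
Proof. move=> ? ?; crush. Qed.
Lemma g0_inj k x y : 0 < k -> x < 4*k -> y < 4*k -> g0 k x = g0 k y -> x = y.
Proof. move=> ? ? ?; crush. Qed.
Lemma g0_dist k x y : 0 < k -> x < 4*k -> y < 4*k -> `|(x:nat) - (g0 k x : nat)|%N = `|(y:nat) - (g0 k y : nat)|%N -> x = y.
Proof. move=> ? ? ?; crush. Qed.
Lemma g1_range k x : x < 4*k+1 -> g1 k x < 4*k+1.
Proof. move=> ?; crush. Qed.
Lemma g1_inj k x y : x < 4*k+1 -> y < 4*k+1 -> g1 k x = g1 k y -> x = y.
Proof. move=> ? ?; crush. Qed.
Lemma g1_dist k x y : x < 4*k+1 -> y < 4*k+1 -> `|(x:nat) - (g1 k x : nat)|%N = `|(y:nat) - (g1 k y : nat)|%N -> x = y.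
Proof. move=> ? ?; crush. Qed.
Lemma sum_ord_id n : (\sum_(i < n) (i:nat)) * 2 = n * n.-1.
Proof.
elim: n => [|n IH]; first by rewrite big_ord0.
rewrite big_ord_recr /= mulnDl IH; case: n {IH} => [|n] //=; lia.
Qed.

Lemma final n u : u * 4 = n * n.-1 -> n %% 4 = 0 \/ n %% 4 = 1.
Proof.
move=> H. have := divn_eq n 4. have := ltn_pmod n (isT : 0 < 4).
move: (n %/ 4) (n %% 4) => q r Hr En. subst n.
case: r Hr H => [|[|[|[|r]]]] //= _ H; try lia.
Qed.

Lemma necess n : solvable_mx (Tmat n) -> n %% 4 = 0 \/ n %% 4 = 1.
Proof.
case=> s /perm_sumn.
rewrite !sumnE big_map big_enum /=.
have -> : iota 0 n = index_iota 0 n by rewrite /index_iota subn0.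
rewrite big_mkord => HD.
have E1 : \sum_(i < n) (s i : nat) = \sum_(i < n) (i : nat).
  by rewrite [RHS](reindex_inj (@perm_inj _ s)).
have E2 : \sum_(i < n) Tmat n i (s i) + \sum_(i < n) (minn i (s i) * 2)
     = \sum_(i < n) (i : nat) + \sum_(i < n) (s i : nat).
  rewrite -!big_split /=.
  apply: eq_bigr => i _; rewrite /Tmat mxE; lia.
rewrite E1 -bigop.big_distrl /= in E2.
have := sum_ord_id n.
move: HD E2; move: (\sum_(i < n) _) (\sum_(i < n) _) (\sum_(i < n) _) => a b c.
move=> -> H1 H2.
apply: (@final n a); lia.
Qed.

Theorem theorem1 (n : nat) (hn : 1 <= n) :
  solvable_mx (Tmat n) <-> (n %% 4 = 0 \/ n %% 4 = 1).
Proof.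
split; first exact: necess.
have := divn_eq n 4; move: (n %/ 4) => k En [H|H]; rewrite H in En.
- have k0 : 0 < k by lia.
  have -> : n = 4 * k by lia. apply: (@build _ (g0 k)).
  + by move=> x; apply: g0_range.
  + by move=> x y; apply: g0_inj.
  + by move=> x y; apply: g0_dist.
- have -> : n = 4 * k + 1 by lia.
  apply: (@build _ (g1 k)).
  + by move=> x; apply: g1_range.
  + by move=> x y; apply: g1_inj.
  + by move=> x y; apply: g1_dist.
Qed.
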